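(* For every $f\in F$, $\ell(x_0f)=\ell(f)\pm1$. More precisely, $\ell(x_0f)=\ell(f)+1$ if at least one of the following holds, and $\ell(x_0f)=\ell(f)-1$ otherwise: (1) the reduced forest diagram of $x_0f$ has larger support than that of $f$; (2) the right space of $f$ has bottom label $L$, and left-multiplication by $x_0$ does not remove this space from the support; (3) the right space of $f$ has label pair $(R,I)$.
   Context: Thompson's group $F$ is realized as the group of all orientation-preserving piecewise-linear homeomorphisms $f$ of $\mathbb R$ with finitely many breakpoints, all breakpoints having dyadic rational coordinates, all slopes integral powers of $2$, and with $f(t)=t-m$ for all sufficiently negative $t$ and $f(t)=t-n$ for all sufficiently positive $t$, for some integers $m,n$. Products are compositions of functions: $fg=f\circ g$. The generators are $x_0(t)=t-1$ and $x_1(t)=t$ for $t\le 0$, $x_1(t)=t/2$ for $0\le t\le 2$, $x_1(t)=t-1$ for $t\ge 2$. A forest diagram for $x_0f$ is obtained from one for $f$ by moving the top pointer one tree to the right. Forest diagrams: a binary forest is a sequence $(T_i)_{i\in\mathbb Z}$ of finite rooted binary trees (every node has $0$ or $2$ children; internal nodes are called carets; a trivial tree is a single leaf), all but finitely many trivial, together with a pointer marking $T_0$. Tree $T_i$ represents the interval $[i,i+1]$, each caret represents halving the interval of its node, and the leaves of the forest give a dyadic subdivision of $\mathbb R$. A forest diagram for $f$ is a pair of binary forests, the bottom (domain) forest with subdivision $\mathcal D$ and the top (range) forest with subdivision $\mathcal R$, such that $f$ maps each interval of $\mathcal D$ linearly onto an interval of $\mathcal R$; this matches the leaves of the two forests by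 an order-preserving bijection, so the two forests share one linearly ordered set of leaves (columns). A reduction deletes an opposing pair of carets, i.e. a top caret and a bottom caret both of whose children are leaves and which have the same two (matched) leaves. A forest diagram is reduced if no reduction is possible; every element of $F$ has a unique reduced forest diagram. The support of a forest diagram is the smallest set of consecutive columns containing all leaves of nontrivial trees of either forest and the leaves of the two trees marked by the two pointers. A space is a gap between two consecutive columns; the spaces in the support are the gaps between consecutive columns of the support. The current tree of $f$ is the tree of the top forest (of the reduced diagram) marked by the top pointer; the right (resp. left) space of $f$ is the space immediately to the right (resp. left) of the current tree. Labels: in each of the two forests separately (using that forest's own pointer), a space is interior if the leaves on both sides of it belong to the same tree and exterior otherwise; it lies immediately to the left of a caret $c$ of that forest if the leaf immediately to its right is the leftmost leaf descending from $c$. Each space of the support receives a label in each forest: $L$ if it is exterior and to the left of the tree marked by the pointer; otherwise $N$ if it lies immediately to the left of some caret; otherwise $R$ if it is exterior (hence to the right of the marked tree); otherwise $I$ (interior). A space thus has a label pair (top label, bottom label); spaces outside the support are unlabeled. Weights, by (top, bottom): $(L,L)=2$, $(L,N)=1$, $(L,R)=1$, $(L,I)=1$; $(N,L)=1$, $(N,N)=2$, $(N,R)=2$, $(N,I)=2$; $(R,L)=1$, $(R,N)=2$, $(R,R)=2$, $(R,I)=0$; $(I,L)=1$, $(I,N)=2$, $(I,R)=0$, $(I,I)=0$. For $f\in F$, $\ell(f)=\ell_0(f)+\ell_1(f)$, where $\ell_0(f)$ is the sum of the weights of the spaces in the support of the reduced forest diagram of $f$ and $\ell_1(f)$ is its total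 number of carets; $\ell(f)$ equals the word length of $f$ with respect to $\{x_0,x_1\}$. *)

(* Defs.v *)
From mathcomp Require Import all_boot all_order all_algebra.
From mathcomp Require Import boolp classical_sets fsbigop.
From mathcomp Require Import zify.
Set Implicit Arguments. Unset Strict Implicit. Unset Printing Implicit Defensive.
Import Order.TTheory GRing.Theory Num.Theory.

Inductive tree := Leaf | Node of tree & tree.

Fixpoint tleaves (t : tree) : nat :=
  match t with Leaf => 1%N | Node l r => (tleaves l + tleaves r)%N end.

Fixpoint tcarets (t : tree) : nat :=
  match t with Leaf => 0%N | Node l r => (tcarets l + tcarets r).+1 end.

(* positions (0-based, left to right, among the leaves of t) of the leftmost
   leaf descending from each caret of t *)
Fixpoint tlmc (t : tree) : seq nat :=
  match t with
  | Leaf => [::]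
  | Node l r => 0%N :: tlmc l ++ map (addn (tleaves l)) (tlmc r)
  end.

(* positions k of the left leaf of each caret of t both of whose children
   are leaves (that caret has the leaves k and k+1) *)
Fixpoint tcherries (t : tree) : seq nat :=
  match t with
  | Leaf => [::]
  | Node Leaf Leaf => [:: 0%N]
  | Node l r => tcherries l ++ map (addn (tleaves l)) (tcherries r)
  end.

(* Binary forests: a sequence (T_i)_{i in Z} of trees, all but finitely many
   trivial; the pointer marks T_0.                                          *)
Record forest := Forest {
  ftree :> int -> tree;
  ftree_fin : exists N : nat, forall i : int, (N < `|i|)%N -> ftree i = Leaf }.

(* Leaves of a forest are numbered by integers ("own columns"), left to right,
   so that the leftmost leaf of T_0 (the marked tree) has number 0.
   fstart F i = number of the leftmost leaf of T_i. *)
Definition fstart (F : forest) (i : int) : int :=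
  match i with
  | Posz n => (\sum_(j < n) tleaves (F (Posz j)))%:Z
  | Negz n => - (\sum_(j < n.+1) tleaves (F (- (Posz j.+1))%R))%:Z
  end.

Definition fleaf (F : forest) (c i : int) (k : nat) : Prop :=
  (k < tleaves (F i))%N /\ (fstart F i + k%:Z = c)%R.

(* The space s of a forest is the gap between its own columns s and s+1. *)
(* exterior: the leaves on both sides belong to different trees, i.e. the
   leaf s+1 is the leftmost leaf of some tree *)
Definition fexterior (F : forest) (s : int) : Prop :=
  exists i : int, fstart F i = (s + 1)%R.

Definition fleft_of_caret (F : forest) (s : int) : Prop :=
  exists (i : int) (k : nat), k \in tlmc (F i) /\ (fstart F i + k%:Z = s + 1)%R.

Inductive label := lL | lN | lR | lI.

(* label of space s in forest F (using F's own pointer, which marks T_0,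
   whose leftmost leaf is column 0): *)
Definition flabel (F : forest) (s : int) : label :=
  if `[< fexterior F s /\ (s + 1 <= 0)%R >] then lL
  else if `[< fleft_of_caret F s >] then lN
  else if `[< fexterior F s >] then lR
  else lI.

(* weights, by (top, bottom) *)
Definition weight (t b : label) : nat :=
  match t, b with
  | lL, lL => 2 | lL, lN => 1 | lL, lR => 1 | lL, lI => 1
  | lN, lL => 1 | lN, lN => 2 | lN, lR => 2 | lN, lI => 2
  | lR, lL => 1 | lR, lN => 2 | lR, lR => 2 | lR, lI => 0
  | lI, lL => 1 | lI, lN => 2 | lI, lR => 0 | lI, lI => 0
  end%N.

(* The two forests share one linearly ordered set of
   leaves (columns), identified with Z via the numbering of the BOTTOM forest
   (column 0 = leftmost leaf of the bottom marked tree).  The top forest's own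
   column t is the common column t + toff.  Every triple is a forest diagram
   of a unique element of F, and every forest diagram arises this way. *)
Record fdiag := FDiag { ftop : forest; fbot : forest; toff : int }.

Definition top_label (D : fdiag) (s : int) : label := flabel (ftop D) (s - toff D)%R.
Definition bot_label (D : fdiag) (s : int) : label := flabel (fbot D) s.

(* columns that must be in the support: leaves of nontrivial trees of either
   forest and the leaves of the two marked trees *)
Definition special_col (D : fdiag) (c : int) : Prop :=
  (exists (i : int) (k : nat), fleaf (ftop D) (c - toff D)%R i k /\
      (ftop D i <> Leaf \/ i = 0%R)) \/
  (exists (i : int) (k : nat), fleaf (fbot D) c i k /\
      (fbot D i <> Leaf \/ i = 0%R)).

Definition supp_col (D : fdiag) (c : int) : Prop :=
  exists x y : int, special_col D x /\ special_col D y /\ (x <= c <= y)%R.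

Definition supp_space (D : fdiag) (s : int) : Prop :=
  supp_col D s /\ supp_col D (s + 1)%R.

Definition space_weight (D : fdiag) (s : int) : nat :=
  weight (top_label D s) (bot_label D s).

Local Open Scope classical_set_scope.

Definition ell0 (D : fdiag) : nat :=
  \big[addn/0%N]_(s \in [set s | supp_space D s]) space_weight D s.

Definition ell1 (D : fdiag) : nat :=
  \big[addn/0%N]_(i \in [set: int]) (tcarets (ftop D i) + tcarets (fbot D i))%N.

Definition ell (D : fdiag) : nat := (ell0 D + ell1 D)%N.

Local Close Scope classical_set_scope.

(* reduced: no opposing pair of carets (a top and a bottom caret, both with
   two leaf children, on the same two columns s, s+1) *)
Definition reduced (D : fdiag) : Prop :=
  ~ exists (s i j : int) (k m : nat),
      k \in tcherries (ftop D i) /\ (fstart (ftop D) i + k%:Z = s - toff D)%R /\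
      m \in tcherries (fbot D j) /\ (fstart (fbot D) j + m%:Z = s)%R.

(* Left multiplication by x0: move the top pointer one tree to the right. *)
Lemma fshift_fin (F : forest) :
  exists N : nat, forall i : int, (N < `|i|)%N -> F (i + 1)%R = Leaf.
Proof.
case: (ftree_fin F) => N HN; exists N.+1 => i Hi; apply: HN.
move: Hi; case: i => [n|n] /=; lia.
Qed.

Definition fshift (F : forest) : forest := Forest (fshift_fin F).

(* the forest diagram of x0 f from that of f: the new marked top tree is the
   old T_1; in the common numbering the top own columns move by the number
   of leaves of the old T_0 *)
Definition x0_diag (D : fdiag) : fdiag :=
  FDiag (fshift (ftop D)) (fbot D) (toff D + (tleaves (ftop D 0%R))%:Z)%R.

(* the right space of f: the space immediately to the right of the current
   tree (top T_0), in common numbering *)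
Definition right_space (D : fdiag) : int :=
  ((tleaves (ftop D 0%R))%:Z - 1 + toff D)%R.

(* Main.v *)
Require Import Defs.
From mathcomp Require Import all_boot all_order all_algebra.
From mathcomp Require Import boolp classical_sets cardinality fsbigop.
From mathcomp Require Import zify.
Set Implicit Arguments. Unset Strict Implicit. Unset Printing Implicit Defensive.
Import Order.TTheory GRing.Theory Num.Theory.
Local Open Scope ring_scope.

Lemma tleaves_gt0 t : (0 < tleaves t)%N.
Proof. elim: t => //= l Hl r Hr; lia. Qed.

Lemma int_eqfun (g h : int -> int) : g 0 = h 0 ->
  (forall i, g (i + 1) - g i = h (i + 1) - h i) -> forall i, g i = h i.
Proof.
move=> H0 Hs; case.
- elim=> [//|n IH]. have := Hs (Posz n). rewrite IH.
  have -> : Posz n + 1 = Posz n.+1 by lia. lia.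
- elim=> [|n IH].
  + have := Hs (Negz 0). have -> : Negz 0 + 1 = 0 by lia. rewrite H0; lia.
  + have := Hs (Negz n.+1). have -> : Negz n.+1 + 1 = Negz n by lia. rewrite IH; lia.
Qed.

Lemma fstartS (F : forest) i : fstart F (i + 1) = fstart F i + (tleaves (F i))%:Z.
Proof.
case: i => [n|n].
- have -> : Posz n + 1 = Posz n.+1 by lia.
  by rewrite /fstart big_ord_recr /= PoszD.
- case: n => [|n].
  + have -> : Negz 0 + 1 = 0 by lia.
    rewrite /fstart /= big_ord_recr !big_ord0 /=.
    have -> : (- Posz 1) = Negz 0 by []. lia.
  + have -> : Negz n.+1 + 1 = Negz n by lia.
    rewrite /fstart [in RHS]big_ord_recr /= PoszD.
    have -> : (- Posz n.+2) = Negz n.+1 by lia. lia.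
Qed.

Lemma fstart0 (F : forest) : fstart F 0 = 0.
Proof. have -> : (0:int) = Posz 0 by []. by rewrite /fstart big_ord0. Qed.

Lemma fstart_addn (F : forest) i (m : nat) : fstart F i <= fstart F (i + m%:Z).
Proof.
elim: m => [|m IH]; first by rewrite addr0.
have -> : i + (m.+1)%:Z = (i + m%:Z) + 1 by lia.
rewrite fstartS; have := tleaves_gt0 (F (i + m%:Z)); lia.
Qed.

Lemma fstart_mono (F : forest) i j : i <= j -> fstart F i <= fstart F j.
Proof.
move=> le; have -> : j = i + `|j - i|%N%:Z by lia. exact: fstart_addn.
Qed.

Lemma fstart_lt (F : forest) i j : i < j -> fstart F i + (tleaves (F i))%:Z <= fstart F j.
Proof. move=> lt; rewrite -fstartS; apply: fstart_mono; lia. Qed.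

Lemma fstart_pos (F : forest) (n : nat) : n%:Z <= fstart F n.
Proof.
elim: n => [|n IH]; first by rewrite fstart0.
have -> : Posz n.+1 = Posz n + 1 by lia.
rewrite fstartS; have := tleaves_gt0 (F n); lia.
Qed.

Lemma fstart_neg (F : forest) (n : nat) : fstart F (- n%:Z) <= - n%:Z.
Proof.
elim: n => [|n IH]; first by rewrite oppr0 fstart0.
have := fstartS F (- (n.+1)%:Z). have -> : - (n.+1)%:Z + 1 = - n%:Z by lia.
have := tleaves_gt0 (F (- (n.+1)%:Z)); lia.
Qed.

Lemma fstart_shift (F : forest) i :
  fstart (fshift F) i = fstart F (i + 1) - (tleaves (F 0))%:Z.
Proof.
apply: (int_eqfun (g := fstart (fshift F))
  (h := fun i => fstart F (i + 1) - (tleaves (F 0))%:Z)) => [|j].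
  by rewrite fstart0 fstartS fstart0 add0r; lia.
rewrite !fstartS. rewrite -[fshift F j]/(F (j + 1)). lia.
Qed.

Lemma fleaf_ex (F : forest) (c : int) : exists i k, fleaf F c i k.
Proof.
suff H : forall m : nat, forall c, fstart F (- m%:Z) <= c < fstart F m ->
    exists i k, fleaf F c i k.
  apply: (H (`|c|%N.+1)). have := fstart_pos F (`|c|%N.+1).
  have := fstart_neg F (`|c|%N.+1). lia.
elim=> [|m IH] {}c Hc; first by move: Hc; rewrite oppr0 -[Posz 0]/(0:int) fstart0; lia.
have := fstartS F m; have := fstartS F (- (m.+1)%:Z).
have -> : - (m.+1)%:Z + 1 = - m%:Z by lia.
have -> : Posz m + 1 = Posz m.+1 by lia.
move=> E1 E2.
case: (ltP c (fstart F (- m%:Z))) => H1.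
  exists (- (m.+1)%:Z), `|c - fstart F (- (m.+1)%:Z)|%N; split; lia.
case: (ltP c (fstart F m)) => H2.
  by apply: IH; lia.
exists (Posz m), `|c - fstart F m|%N; split; lia.
Qed.

Definition t0 (F : forest) : int := (tleaves (F (Posz 0)))%:Z.

Lemma fstart1 (F : forest) : fstart F 1 = t0 F.
Proof. have -> : (1:int) = Posz 1 by []. by rewrite /fstart /t0 big_ord_recr big_ord0. Qed.

Lemma t0_gt0 (F : forest) : 0 < t0 F.
Proof. rewrite /t0; have := tleaves_gt0 (F (Posz 0)); lia. Qed.

Lemma fstart_shift' (F : forest) i : fstart (fshift F) i = fstart F (i + 1) - t0 F.
Proof. exact: fstart_shift. Qed.

Section Shift.
Variable F : forest.
Local Notation n := (t0 F).

Lemma fexterior_shift t : fexterior (fshift F) t <-> fexterior F (t + n).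
Proof.
split=> [[i Hi]|[i Hi]].
  exists (i + 1); move: Hi; rewrite fstart_shift'; lia.
exists (i - 1); rewrite fstart_shift' subrK; lia.
Qed.

Lemma fleft_shift t : fleft_of_caret (fshift F) t <-> fleft_of_caret F (t + n).
Proof.
split=> [[i [k [Hk Hi]]]|[i [k [Hk Hi]]]].
  exists (i + 1), k; split=> //; move: Hi; rewrite fstart_shift'; lia.
exists (i - 1), k; split; first by rewrite /= subrK.
rewrite fstart_shift' subrK; lia.
Qed.

Lemma fleaf_shift c i k : fleaf (fshift F) c i k <-> fleaf F (c + n) (i + 1) k.
Proof.
rewrite /fleaf fstart_shift' /=; split=> [[H1 H2]|[H1 H2]]; split=> //; lia.
Qed.

Lemma fexterior_mid t : 0 < t + 1 < n -> ~ fexterior F t.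
Proof.
move=> Ht [i Hi].
case: (lerP i 0) => Hi0.
  have := fstart_mono F Hi0; rewrite fstart0; lia.
have : 1 <= i by lia.
move/(fstart_mono F); rewrite fstart1; lia.
Qed.

Lemma fexterior_n : fexterior F (n - 1).
Proof. by exists 1; rewrite subrK fstart1. Qed.

End Shift.
Lemma flabel_eq (F G : forest) s t :
  (fexterior F s <-> fexterior G t) ->
  (fleft_of_caret F s <-> fleft_of_caret G t) ->
  (fexterior F s -> (s + 1 <= 0) = (t + 1 <= 0)) -> flabel F s = flabel G t.
Proof.
move=> E1 E2 E3; rewrite /flabel.
case: (asboolP (fexterior F s /\ s + 1 <= 0)) => H1;
case: (asboolP (fexterior G t /\ t + 1 <= 0)) => H1'.
- by [].
- exfalso; apply: H1'; case: H1 => A B; split; [by apply/E1|by rewrite -E3].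
- exfalso; apply: H1; case: H1' => A B; have A' : fexterior F s by apply/E1.
  by split => //; rewrite E3.
case: (asboolP (fleft_of_caret F s)) => H2;
case: (asboolP (fleft_of_caret G t)) => H2' //; try by exfalso; tauto.
case: (asboolP (fexterior F s)) => H3;
case: (asboolP (fexterior G t)) => H3' //; by exfalso; tauto.
Qed.

Lemma special_0 (X : fdiag) : special_col X 0.
Proof.
right; exists 0, 0%N; split; last by right.
split; [exact: tleaves_gt0 | by rewrite fstart0 addr0].
Qed.

Lemma special_bot (X : fdiag) c i k :
  fleaf (fbot X) c i k -> fbot X i <> Leaf -> special_col X c.
Proof. by move=> H1 H2; right; exists i, k; split=> //; left. Qed.

Lemma leaf_tree_Leaf (F : forest) c i k : fleaf F c i k -> F i = Leaf -> k = 0%N.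
Proof. by case=> H _ E; move: H; rewrite E /=; lia. Qed.

Lemma supp_special (X : fdiag) c : special_col X c -> supp_col X c.
Proof. by move=> H; exists c, c; split=> //; split=> //; rewrite lexx. Qed.

Lemma supp_between (X : fdiag) a b c :
  supp_col X a -> supp_col X b -> a <= c <= b -> supp_col X c.
Proof.
move=> [x [y0 [Hx [_ Ha]]]] [x0 [y [_ [Hy Hb]]]] Hc.
by exists x, y; split=> //; split=> //; lia.
Qed.

Section Diag.
Variable D : fdiag.
Local Notation T := (ftop D).
Local Notation B := (fbot D).
Local Notation o := (toff D).
Local Notation n := (t0 (ftop D)).
Local Notation D' := (x0_diag D).
Local Notation rs := (right_space D).

Lemma toff_x0 : toff D' = o + n. Proof. by []. Qed.
Lemma ftop_x0 : ftop D' = fshift T. Proof. by []. Qed.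
Lemma fbot_x0 : fbot D' = B. Proof. by []. Qed.
Lemma rsE : rs = n - 1 + o. Proof. by []. Qed.

Lemma top_label_x0 s : s <> rs -> top_label D' s = top_label D s.
Proof.
move=> Hs; rewrite /top_label toff_x0 ftop_x0.
have E : s - (o + n) + n = s - o by lia.
apply: flabel_eq.
- by rewrite fexterior_shift E.
- by rewrite fleft_shift E.
move=> /fexterior_shift; rewrite E => Hex.
have := t0_gt0 T.
case: (ltP 0 (s - o + 1)) => H1; last by lia.
case: (ltP (s - o + 1) n) => H2; first by exfalso; apply: (fexterior_mid (F:=T) (t := s - o) _ Hex); lia.
move: Hs; rewrite rsE; lia.
Qed.

Lemma top_label_x0_rs : top_label D' rs = lL.
Proof.
rewrite /top_label toff_x0 ftop_x0 rsE /flabel asboolT //; split; last by lia.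
apply/fexterior_shift. have -> : n - 1 + o - (o + n) + n = n - 1 by lia.
exact: fexterior_n.
Qed.

Lemma top_label_rs : top_label D rs = lN \/ top_label D rs = lR.
Proof.
rewrite /top_label rsE /flabel.
have -> : n - 1 + o - o = n - 1 by lia.
rewrite asboolF; last by have := t0_gt0 T; lia.
case: asboolP => _; first by left.
by rewrite asboolT; [right|apply: fexterior_n].
Qed.

Lemma special_x0_sub c : special_col D' c -> special_col D c \/ c = rs + 1.
Proof.
case=> [[i [k [Hl Hi]]]|H]; last by left; right.
move/fleaf_shift: Hl; rewrite toff_x0.
have -> : c - (o + n) + n = c - o by lia.
move=> Hl.
have [HL|HL] := (boolp.EM (T (i + 1) = Leaf)).
- case: Hi => Hi; first by exfalso; apply: Hi.
  right. subst i. have := leaf_tree_Leaf Hl HL => Ek; subst k.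
  case: Hl => _; rewrite add0r fstart1 rsE; lia.
- by left; left; exists (i + 1), k; split => //; left.
Qed.

Lemma special_x0_sup c : special_col D c -> special_col D' c \/ c = rs.
Proof.
case=> [[i [k [Hl Hi]]]|H]; last by left; right.
have [HL|HL] := (boolp.EM (T i = Leaf)).
- case: Hi => Hi; first by exfalso; apply: Hi.
  right. subst i. have := leaf_tree_Leaf Hl HL => Ek; subst k.
  have Hn : n = 1 by rewrite /t0 -[Posz 0]/(0:int) HL.
  case: Hl => _; rewrite fstart0 rsE Hn; lia.
- left; left; exists (i - 1), k; split; last by left; rewrite /= subrK.
  apply/fleaf_shift; rewrite subrK.
  by have -> : c - toff D' + n = c - o by rewrite toff_x0; lia.
Qed.

Lemma special_rs : special_col D rs.
Proof.
left; exists 0, (tleaves (T 0)).-1; split; last by right.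
have := tleaves_gt0 (T 0).
split; first by lia.
rewrite fstart0 add0r rsE /t0 -[Posz 0]/(0:int). lia.
Qed.

Lemma special_x0_rs1 : special_col D' (rs + 1).
Proof.
left; exists 0, 0%N; split; last by right.
split; first by exact: tleaves_gt0.
rewrite fstart0 addr0 toff_x0 rsE; lia.
Qed.

Lemma col_agree c : c <> rs -> c <> rs + 1 -> (supp_col D c <-> supp_col D' c).
Proof.
move=> H1 H2; split=> [[x [y [Hx [Hy Hc]]]]|[x [y [Hx [Hy Hc]]]]].
- have [x' [Hx' Hxc]] : exists x', special_col D' x' /\ x' <= c.
    case: (special_x0_sup Hx) => [?|Ex]; first by exists x; split => //; lia.
    exists (rs + 1); split; first exact: special_x0_rs1. lia.
  have [y' [Hy' Hyc]] : exists y', special_col D' y' /\ c <= y'.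
    case: (special_x0_sup Hy) => [?|Ey]; first by exists y; split => //; lia.
    exists (rs + 1); split; first exact: special_x0_rs1. lia.
  by exists x', y'; split=> //; split=> //; lia.
- have [x' [Hx' Hxc]] : exists x', special_col D x' /\ x' <= c.
    case: (special_x0_sub Hx) => [?|Ex]; first by exists x; split => //; lia.
    exists rs; split; first exact: special_rs. lia.
  have [y' [Hy' Hyc]] : exists y', special_col D y' /\ c <= y'.
    case: (special_x0_sub Hy) => [?|Ey]; first by exists y; split => //; lia.
    exists rs; split; first exact: special_rs. lia.
  by exists x', y'; split=> //; split=> //; lia.
Qed.

Lemma space_agree s : s <> rs -> (supp_space D s <-> supp_space D' s).
Proof.
move=> Hs.
have S1 := supp_special special_rs.
have S2 := supp_special special_x0_rs1.
have [E|E] := boolp.EM (s = rs - 1).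
  subst s; rewrite /supp_space subrK.
  have C := col_agree (c := rs - 1); split=> [[A _]|[A _]].
    have A' : supp_col D' (rs - 1) by apply/C => //; lia.
    by split=> //; apply: (supp_between A' S2); lia.
  by split=> //; apply/C => //; lia.
have [E'|E'] := boolp.EM (s = rs + 1).
  subst s; rewrite /supp_space.
  have C := col_agree (c := rs + 1 + 1); split=> [[A A2]|[A A2]].
    by split=> //; apply/C => //; lia.
  have A2' : supp_col D (rs + 1 + 1) by apply/C => //; lia.
  by split=> //; apply: (supp_between S1 A2'); lia.
rewrite /supp_space.
have C1 := col_agree (c := s); have C2 := col_agree (c := s + 1).
split=> [[A A2]|[A A2]]; split; (apply/C1 || apply/C2) => //; lia.
Qed.

End Diag.
Lemma forest_bound (F : forest) : exists lo hi : int,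
  forall c i k, fleaf F c i k -> (F i <> Leaf \/ i = 0) -> lo <= c <= hi.
Proof.
case: (ftree_fin F) => N HN.
exists (fstart F (- N%:Z)), (fstart F (N%:Z + 1)) => c i k [Hk Hc] Hi.
have Hi' : - N%:Z <= i <= N%:Z.
  case: Hi => [Hi|->]; last by lia.
  case: (leqP `|i|%N N) => H; first by lia.
  by exfalso; apply: Hi; apply: HN.
have L1 := fstart_mono F (_ : - N%:Z <= i).
have L2 := fstart_mono F (_ : i + 1 <= N%:Z + 1).
have := fstartS F i.
move: (L1 ltac:(lia)) (L2 ltac:(lia)); rewrite fstartS; lia.
Qed.

Lemma special_bound (X : fdiag) : exists lo hi : int,
  forall c, special_col X c -> lo <= c <= hi.
Proof.
case: (forest_bound (ftop X)) => lo1 [hi1 H1].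
case: (forest_bound (fbot X)) => lo2 [hi2 H2].
exists (Num.min (lo1 + toff X) lo2), (Num.max (hi1 + toff X) hi2) => c.
case=> [[i [k [Hl Hi]]]|[i [k [Hl Hi]]]].
  have := H1 _ _ _ Hl Hi. rewrite ge_min le_max. lia.
have := H2 _ _ _ Hl Hi. rewrite ge_min le_max. lia.
Qed.

Lemma supp_bound (X : fdiag) : exists lo hi : int,
  forall c, supp_col X c -> lo <= c <= hi.
Proof.
case: (special_bound X) => lo [hi H]; exists lo, hi => c [x [y [Hx [Hy Hc]]]].
have := H _ Hx; have := H _ Hy; lia.
Qed.

Lemma finite_int (A : set int) lo hi :
  (forall c, A c -> lo <= c <= hi) -> finite_set A.
Proof.
move=> H.
apply: (sub_finite_set (B := (fun k : nat => lo + k%:Z) @` `I_(`|hi - lo|.+1))).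
  move=> c Ac; have := H c Ac => Hc.
  exists `|c - lo|%N; rewrite /= ?inE; lia.
by apply: finite_image; apply: finite_II.
Qed.

Local Open Scope classical_set_scope.

Lemma fsum_split_int (f g : int -> nat) (M : nat) :
  (forall i, (M < `|i|)%N -> f i = 0%N) -> (forall i, (M < `|i|)%N -> g i = 0%N) ->
  \big[addn/0%N]_(i \in [set: int]) (f i + g i)%N =
  (\big[addn/0%N]_(i \in [set: int]) f i + \big[addn/0%N]_(i \in [set: int]) g i)%N.
Proof.
move=> Hf Hg.
pose P := [set i : int | - M%:Z <= i <= M%:Z].
have FP : finite_set P by apply: (finite_int (lo := - M%:Z) (hi := M%:Z)).
have W (h : int -> nat) : (forall i, (M < `|i|)%N -> h i = 0%N) ->
    \big[addn/0%N]_(i \in P) h i = \big[addn/0%N]_(i \in [set: int]) h i.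
  move=> Hh; apply: fsbig_widen => // i [_ Pi]; rewrite /= Hh //.
  case: (leqP `|i|%N M) => // H; exfalso; apply: Pi; rewrite /P /=; lia.
rewrite -!W //; last by move=> i Hi; rewrite Hf ?Hg.
exact: fsbig_split.
Qed.

Lemma ell1_x0 (D : fdiag) : ell1 (x0_diag D) = ell1 D.
Proof.
case: (ftree_fin (ftop D)) => N1 H1; case: (ftree_fin (fbot D)) => N2 H2.
rewrite /ell1 /=.
rewrite !(fsum_split_int (M := (N1 + N2).+1)); first last.
- by move=> i Hi; rewrite H2 //; lia.
- by move=> i Hi; rewrite H1 //; lia.
- by move=> i Hi; rewrite H2 //; lia.
- by move=> i Hi; rewrite H1 //; lia.
congr addn.
rewrite (reindex_fsbigT (fun i : int => i + 1) (fun i => tcarets (ftop D i))) //.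
by exists (fun i => i - 1) => i; rewrite ?subrK ?addrK.
Qed.

Lemma ell0_in (X : fdiag) r : supp_space X r ->
  ell0 X = (space_weight X r +
    \big[addn/0%N]_(s \in [set s | supp_space X s] `\ r) space_weight X s)%N.
Proof.
move=> H; rewrite /ell0 (fsbigD1 r) //.
case: (supp_bound X) => lo [hi Hb].
by apply: (finite_int (lo := lo) (hi := hi)) => c [Hc _]; apply: Hb.
Qed.

Lemma ell0_out (X : fdiag) r : ~ supp_space X r ->
  ell0 X = \big[addn/0%N]_(s \in [set s | supp_space X s] `\ r) space_weight X s.
Proof.
move=> H; rewrite /ell0; apply: eq_fsbigl.
apply/funext => s; apply/propext; split=> [Hs|[]//]; split=> //= E.
by move: E Hs => -> .
Qed.

Lemma flabel_L (F : forest) s : flabel F s = lL -> fexterior F s /\ s + 1 <= 0.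
Proof.
rewrite /flabel; case: asboolP => // _.
case: asboolP => // _; case: asboolP => //.
Qed.

Lemma flabel_L' (F : forest) s : fexterior F s -> s + 1 <= 0 -> flabel F s = lL.
Proof. by move=> H1 H2; rewrite /flabel asboolT. Qed.

Local Close Scope classical_set_scope.

Theorem proposition4p3p3 (D : fdiag) :
  reduced D ->
  let D' := x0_diag D in
  let rs := right_space D in
  let cond :=
    (* (1) the reduced diagram of x0 f has larger support than that of f *)
    ((forall c, supp_col D c -> supp_col D' c) /\
       exists c, supp_col D' c /\ ~ supp_col D c)
    (* (2) right space of f has bottom label L and stays in the support *)
    \/ (supp_space D rs /\ bot_label D rs = lL /\ supp_space D' rs)
    (* (3) right space of f has label pair (R, I) *)
    \/ (supp_space D rs /\ top_label D rs = lR /\ bot_label D rs = lI) in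
  (cond -> ell D' = (ell D + 1)%N) /\ (~ cond -> (ell D' + 1)%N = ell D).
Proof.
move=> _; cbv zeta.
set D' := x0_diag D; set rs := right_space D.
have E1 : ell1 D' = ell1 D := ell1_x0 D.
have Wsame : \big[addn/0%N]_(s \in ([set s | supp_space D' s] `\ rs)%classic) space_weight D' s
    = \big[addn/0%N]_(s \in ([set s | supp_space D s] `\ rs)%classic) space_weight D s.
  have -> : ([set s | supp_space D' s] `\ rs = [set s | supp_space D s] `\ rs)%classic.
    apply/funext => s; apply/propext; split=> [[H1 H2]|[H1 H2]]; split=> //.
      by apply/(space_agree (D := D)).
    by apply/(space_agree (D := D)).
  apply: eq_fsbigr => s; rewrite inE => -[_ Hs].
  by rewrite /space_weight top_label_x0.
have Srs : supp_col D rs := supp_special (special_rs D).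
have Srs1 : supp_col D' (rs + 1) := supp_special (special_x0_rs1 D).
have S0 : supp_col D 0 := supp_special (special_0 D).
have S0' : supp_col D' 0 := supp_special (special_0 D').
have Htop : top_label D rs = lN \/ top_label D rs = lR := top_label_rs D.
have HtopL : top_label D' rs = lL := top_label_x0_rs D.
have Hbot : bot_label D' rs = bot_label D rs by [].
rewrite /ell E1.
have [inA|inA] := boolp.EM (supp_space D rs);
have [inA'|inA'] := boolp.EM (supp_space D' rs).
-
  rewrite (ell0_in inA) (ell0_in inA') Wsame /space_weight HtopL Hbot.
  have not1 : ~ exists c, supp_col D' c /\ ~ supp_col D c.
    move=> [c [Hc Hnc]]; apply: Hnc.
    have [->|Ec] := boolp.EM (c = rs); first by [].
    have [->|Ec1] := boolp.EM (c = rs + 1); first by case: inA.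
    by apply/(col_agree Ec Ec1).
  case: Htop => Ht; rewrite Ht; case Eb: (bot_label D rs) => /=; split => Hc;
    first [ lia
          | exfalso; case: Hc => [[_ Hx]|[[_ [Hx _]]|[_ [Hx Hy]]]];
              [by apply: not1 | congruence | congruence]
          | exfalso; apply: Hc; right; left; by split
          | exfalso; apply: Hc; right; right; by split ].
-
  rewrite (ell0_in inA) (ell0_out inA') Wsame /space_weight.
  have nrs : ~ supp_col D' rs.
    by move=> H; apply: inA'; split.
  have neg : rs + 1 <= 0.
    case: (lerP 0 rs) => H; last by lia.
    by exfalso; apply: nrs; apply: (supp_between S0' Srs1); lia.
  have BL : bot_label D rs = lL.
    apply: flabel_L' => //.
    case: (fleaf_ex (fbot D) (rs + 1)) => i [[|k] [Hk Hi]].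
      by exists i; rewrite -Hi addr0.
    exfalso; apply: nrs; apply: supp_special.
    apply: (special_bot (i := i) (k := k)).
      by rewrite /fleaf /=; split; lia.
    by move=> E; move: Hk; rewrite E.
  rewrite BL.
  split=> Hc.
    exfalso; case: Hc => [[Hx _]|[[_ [_ Hx]]|[_ [_ Hx]]]].
    - by apply: nrs; apply: Hx.
    - by apply: inA'.
    - by [].
  by case: Htop => -> /=; lia.
-
  rewrite (ell0_out inA) (ell0_in inA') Wsame /space_weight HtopL Hbot.
  have nrs1 : ~ supp_col D (rs + 1) by move=> H; apply: inA.
  have BL : bot_label D rs <> lL.
    move=> /flabel_L [_ H]; apply: nrs1.
    by apply: (supp_between Srs S0); lia.
  have C1 : (forall c, supp_col D c -> supp_col D' c) /\
      exists c, supp_col D' c /\ ~ supp_col D c.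
    split; last by exists (rs + 1).
    move=> c Hc.
    have [->|Ec] := boolp.EM (c = rs); first by case: inA'.
    have [Ec1|Ec1] := boolp.EM (c = rs + 1); first by rewrite Ec1.
    by apply/(col_agree Ec Ec1).
  split=> Hc; last by exfalso; apply: Hc; left.
  by case Eb: (bot_label D rs) BL => //= _; lia.
-
  exfalso.
  case: (lerP (rs + 1) 0) => H.
    by apply: inA; split=> //; apply: (supp_between Srs S0); lia.
  apply: inA'; split=> //; apply: (supp_between S0' Srs1); lia.
Qed.
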